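(* Let $\mathcal M$ be a finite polyptych lattice over $F$ and let $p\in \mathrm{Sp}(\mathcal M)$. Then $p$ is linear on every cone of $\Sigma(\mathcal M)$: for every $\mathcal C\in\Sigma(\mathcal M)$ and every $\alpha\in I$, the map $p\circ\pi_\alpha^{-1}$ restricted to $\pi_\alpha(\mathcal C)\cap M_\alpha$ is the restriction of an $F$-linear map $M_\alpha\to F$. Moreover, for every $F'$ with $F\subseteq F'\subseteq\mathbb R$, $p$ extends to a (continuous) function on $\mathcal M_{F'}$ which is $F'$-linear on each cone of $\Sigma(\mathcal M)$, and this extension lies in $\mathrm{Sp}_{F'}(\mathcal M)$.
   Context: Fix a subring $F$ with $\mathbb Z\subseteq F\subseteq\mathbb R$. A map $\psi:M\to M'$ between finite-rank free $F$-modules is piecewise $F$-linear if it is (the restriction of) a continuous map and there is a complete fan of $F$-rational polyhedral cones in $M\otimes_F\mathbb R$ such that $\psi|_{C\cap M}$ is $F$-linear for every cone $C$. A polyptych lattice of rank $r$ over $F$ is a collection $\{M_\alpha\}_{\alpha\in I}$ of free $F$-modules of rank $r$ with piecewise $F$-linear maps (mutations) $\mu_{\alpha,\beta}:M_\alpha\to M_\beta$ for all $\alpha,\beta\in I$ such that $\mu_{\alpha,\alpha}=\mathrm{id}$, $\mu_{\alpha,\beta}=\mu_{\beta,\alpha}^{-1}$ and $\mu_{\beta,\gamma}\circ\mu_{\alpha,\beta}=\mu_{\alpha,\gamma}$; it is finite if $I$ is finite. Its set of elements, also denoted $\mathcal M$, is $\bigsqcup_\alpha M_\alpha$ modulo $m_\alpha\sim\mu_{\alpha,\beta}(m_\alpha)$,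 and $\pi_\alpha:\mathcal M\to M_\alpha$ sends a class to its unique representative in $M_\alpha$. For $F\subseteq F'\subseteq \mathbb R$, $\mathcal M_{F'}$ is the polyptych lattice with charts $M_\alpha\otimes_FF'$ and the natural extensions of the mutations (in particular $\mathcal M_{\mathbb R}$). Write $m+_\alpha m':=\pi_\alpha^{-1}(\pi_\alpha(m)+\pi_\alpha(m'))$, and for $\lambda\in F_{\ge0}$, $\lambda m:=\pi_\alpha^{-1}(\lambda\pi_\alpha(m))$ (independent of $\alpha$). For finite $\mathcal M$, the PL fan $\Sigma(\mathcal M)$: fix $\alpha$, let $\Sigma(\mathcal M,\alpha)$ be the common refinement, over $\beta\in I$, of the minimal fans in $M_\alpha\otimes\mathbb R$ on whose cones $\mu_{\alpha,\beta}$ is linear; $\Sigma(\mathcal M)=\{\pi_\alpha^{-1}(C): C\in\Sigma(\mathcal M,\alpha)\}$ (independent of $\alpha$). A point of $\mathcal M$ is a function $p:\mathcal M\to F$ with $p(m)+p(m')=\min_{\alpha\in I}p(m+_\alpha m')$ for all $m,m'\in\mathcal M$ and $p(\lambda m)=\lambda p(m)$ for all $\lambda\in F_{\ge0}$; $\mathrm{Sp}(\mathcal M)$ is the set of points and $\mathrm{Sp}_{F'}(\mathcal M)$ the set of points of $\mathcal M_{F'}$. *)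

(* Defs.v *)
From HB Require Import structures.
From mathcomp Require Import all_boot all_order all_algebra.
From mathcomp Require Import reals.
From Stdlib Require List.
Set Implicit Arguments. Unset Strict Implicit. Unset Printing Implicit Defensive.
Import Order.TTheory GRing.Theory Num.Theory.
Local Open Scope ring_scope.

(* Charts: a free F-module of rank r is modelled as F^r, sitting inside
   M (x)_F R = R^r, here row vectors 'rV[R]_r. *)

Definition is_subring (R : realType) (F : R -> Prop) : Prop :=
  F 1 /\ (forall x y, F x -> F y -> F (x - y)) /\ (forall x y, F x -> F y -> F (x * y)).

Definition inFv (R : realType) (r : nat) (F : R -> Prop) (v : 'rV[R]_r) : Prop :=
  forall i, F (v 0 i).

Definition dotv (R : realType) (r : nat) (u x : 'rV[R]_r) : R :=
  \sum_(i < r) u 0 i * x 0 i.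

Definition cone_of (R : realType) (r : nat) (s : seq 'rV[R]_r) : 'rV[R]_r -> Prop :=
  fun x => forall u, u \in s -> 0 <= dotv u x.

Definition polycone (R : realType) (r : nat) (C : 'rV[R]_r -> Prop) : Prop :=
  exists s : seq 'rV[R]_r, forall x, C x <-> cone_of s x.

Definition Frational_cone (R : realType) (r : nat) (F : R -> Prop) (C : 'rV[R]_r -> Prop) : Prop :=
  exists s : seq 'rV[R]_r, (forall u, u \in s -> inFv F u) /\ (forall x, C x <-> cone_of s x).

Definition is_face (R : realType) (r : nat) (C D : 'rV[R]_r -> Prop) : Prop :=
  exists u : 'rV[R]_r, (forall x, C x -> 0 <= dotv u x) /\
    (forall x, D x <-> (C x /\ dotv u x = 0)).

Definition is_fan (R : realType) (r : nat) (Phi : seq ('rV[R]_r -> Prop)) : Prop :=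
  (forall C, List.In C Phi -> polycone C) /\
  (forall C D, List.In C Phi -> is_face C D ->
     exists2 D', List.In D' Phi & forall x, D x <-> D' x) /\
  (forall C D, List.In C Phi -> List.In D Phi ->
     is_face C (fun x => C x /\ D x) /\ is_face D (fun x => C x /\ D x)).

Definition complete_fan (R : realType) (r : nat) (Phi : seq ('rV[R]_r -> Prop)) : Prop :=
  is_fan Phi /\ (forall x, exists2 C, List.In C Phi & C x).

Definition lin_on (R : realType) (r : nat) (f : 'rV[R]_r -> 'rV[R]_r) (C : 'rV[R]_r -> Prop) : Prop :=
  exists B : 'M[R]_r, forall x, C x -> f x = x *m B.

Definition Flin_on (R : realType) (r : nat) (F : R -> Prop) (f : 'rV[R]_r -> 'rV[R]_r)
  (C : 'rV[R]_r -> Prop) : Prop :=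
  exists B : 'M[R]_r, (forall i j, F (B i j)) /\ (forall x, C x -> f x = x *m B).

Definition near_v (R : realType) (r : nat) (d : R) (x y : 'rV[R]_r) : Prop :=
  forall i, `|x 0 i - y 0 i| < d.

Definition contV (R : realType) (r : nat) (f : 'rV[R]_r -> 'rV[R]_r) : Prop :=
  forall x (e : R), 0 < e -> exists2 d : R, 0 < d &
    forall y, near_v d x y -> near_v e (f x) (f y).

Definition cont_on (R : realType) (r : nat) (S : 'rV[R]_r -> Prop) (g : 'rV[R]_r -> R) : Prop :=
  forall x, S x -> forall (e : R), 0 < e -> exists2 d : R, 0 < d &
    forall y, S y -> near_v d x y -> `|g x - g y| < e.

(* piecewise F-linear map (given by its real piecewise-linear extension) *)
Definition PL (R : realType) (r : nat) (F : R -> Prop) (f : 'rV[R]_r -> 'rV[R]_r) : Prop :=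
  contV f /\ exists Phi : seq ('rV[R]_r -> Prop),
    complete_fan Phi /\ (forall C, List.In C Phi -> Frational_cone F C /\ Flin_on F f C).

Definition is_polyptych (R : realType) (r : nat) (I : finType) (F : R -> Prop)
  (mu : I -> I -> 'rV[R]_r -> 'rV[R]_r) : Prop :=
  (forall a b, PL F (mu a b)) /\
  (forall a x, mu a a x = x) /\
  (forall a b x, mu b a (mu a b x) = x /\ mu a b (mu b a x) = x) /\
  (forall a b c x, mu b c (mu a b x) = mu a c x).

(* Elements of the polyptych lattice M_F: compatible families of representatives
   (one per chart), i.e. equivalence classes of the disjoint union. *)
Definition elems (R : realType) (r : nat) (I : finType) (F : R -> Prop)
  (mu : I -> I -> 'rV[R]_r -> 'rV[R]_r) (m : I -> 'rV[R]_r) : Prop :=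
  (forall a b, m b = mu a b (m a)) /\ (forall a, inFv F (m a)).

Definition pinv (R : realType) (r : nat) (I : finType)
  (mu : I -> I -> 'rV[R]_r -> 'rV[R]_r) (a : I) (v : 'rV[R]_r) : I -> 'rV[R]_r :=
  fun b => mu a b v.

Definition addA (R : realType) (r : nat) (I : finType)
  (mu : I -> I -> 'rV[R]_r -> 'rV[R]_r) (a : I) (m m' : I -> 'rV[R]_r) : I -> 'rV[R]_r :=
  pinv mu a (m a + m' a).

Definition scaleA (R : realType) (r : nat) (I : finType)
  (mu : I -> I -> 'rV[R]_r -> 'rV[R]_r) (a : I) (l : R) (m : I -> 'rV[R]_r) : I -> 'rV[R]_r :=
  pinv mu a (l *: m a).

(* p is a point of M_F (p in Sp_F(M)); p is a function on M_F with values in F.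
   p m + p m' = min_a p (m +_a m') is written out as "attained and a lower bound". *)
Definition is_point (R : realType) (r : nat) (I : finType) (F : R -> Prop)
  (mu : I -> I -> 'rV[R]_r -> 'rV[R]_r) (p : (I -> 'rV[R]_r) -> R) : Prop :=
  (forall m, elems F mu m -> F (p m)) /\
  (forall m m', elems F mu m -> elems F mu m' ->
     (exists a, p m + p m' = p (addA mu a m m')) /\
     (forall a, p m + p m' <= p (addA mu a m m'))) /\
  (forall (l : R) m a, F l -> 0 <= l -> elems F mu m -> p (scaleA mu a l m) = l * p m).

Definition min_lin_fan (R : realType) (r : nat) (f : 'rV[R]_r -> 'rV[R]_r)
  (Phi : seq ('rV[R]_r -> Prop)) : Prop :=
  complete_fan Phi /\ (forall C, List.In C Phi -> lin_on f C) /\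
  (forall Psi, complete_fan Psi -> (forall D, List.In D Psi -> lin_on f D) ->
     forall D, List.In D Psi -> exists2 C, List.In C Phi & forall x, D x -> C x).

(* C is a cone of Sigma(M, a): the common refinement over b of the minimal fans
   of linearity of mu_{a,b}, i.e. an intersection of one cone from each. *)
Definition SigmaA (R : realType) (r : nat) (I : finType)
  (mu : I -> I -> 'rV[R]_r -> 'rV[R]_r) (a : I) (C : 'rV[R]_r -> Prop) : Prop :=
  exists (Phi : I -> seq ('rV[R]_r -> Prop)) (D : I -> 'rV[R]_r -> Prop),
    (forall b, min_lin_fan (mu a b) (Phi b)) /\
    (forall b, List.In (D b) (Phi b)) /\
    (forall x, C x <-> forall b, D b x).

(* the function q (on M_{F'}) is F'-linear on the cone pi_{a0}^{-1}(C0) of Sigma(M),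
   read in chart a: q o pi_a^{-1} agrees on pi_a(pi_{a0}^{-1} C0) cap F'^r
   with an F'-linear functional F'^r -> F'. *)
Definition lin_on_cone (R : realType) (r : nat) (I : finType) (F' : R -> Prop)
  (mu : I -> I -> 'rV[R]_r -> 'rV[R]_r) (q : (I -> 'rV[R]_r) -> R)
  (a0 : I) (C0 : 'rV[R]_r -> Prop) (a : I) : Prop :=
  exists c : 'rV[R]_r, inFv F' c /\
    forall v, (exists2 x, C0 x & v = mu a0 a x) -> inFv F' v ->
      q (pinv mu a v) = dotv c v.

(* Main.v *)
Require Import Defs.
From HB Require Import structures.
From mathcomp Require Import all_boot all_order all_algebra.
From mathcomp Require Import reals.
From Stdlib Require Import Classical FunctionalExtensionality IndefiniteDescription.
From Stdlib Require List.
From mathcomp Require Import ring lra.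
Import Order.TTheory GRing.Theory Num.Theory.
Local Open Scope ring_scope.
Set Implicit Arguments. Unset Strict Implicit. Unset Printing Implicit Defensive.
Import Defs.
Section Basic.
Variable R : realType.

Lemma fin_delta (T : Type) (s : list T) (P : T -> R -> Prop) :
  (forall t d d', 0 < d' -> d' <= d -> P t d -> P t d') ->
  (forall t, List.In t s -> exists2 d, 0 < d & P t d) ->
  exists2 d, 0 < d & forall t, List.In t s -> P t d.
Proof.
move=> mono; elim: s => [|t s IH] H; first by exists 1 => //.
have [d1 d1p Pd1] := H t (or_introl erefl).
have [d2 d2p Pd2] := IH (fun t' h => H t' (or_intror h)).
exists (Num.min d1 d2); first by rewrite lt_min d1p d2p.
move=> t' [<-|h].
  by apply: (mono _ d1) => //; [rewrite lt_min d1p d2p | rewrite ge_min lexx].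
by apply: (mono _ d2) => //; [rewrite lt_min d1p d2p | rewrite ge_min lexx orbT| apply: Pd2].
Qed.

Lemma In_mem (T : eqType) (x : T) (s : seq T) : x \in s -> List.In x s.
Proof. elim: s => //= y s IH; rewrite inE => /orP [/eqP ->|h]; [by left|right; exact: IH]. Qed.

Lemma fin_delta_fin (T : finType) (P : T -> R -> Prop) :
  (forall t d d', 0 < d' -> d' <= d -> P t d -> P t d') ->
  (forall t, exists2 d, 0 < d & P t d) ->
  exists2 d, 0 < d & forall t, P t d.
Proof.
move=> mono H; have [d dp Hd] := @fin_delta _ (enum T) P mono (fun t _ => H t).
by exists d => // t; apply: Hd; apply: In_mem; rewrite mem_enum.
Qed.

Lemma fin_delta_seq (T : eqType) (s : seq T) (P : T -> R -> Prop) :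
  (forall t d d', 0 < d' -> d' <= d -> P t d -> P t d') ->
  (forall t, t \in s -> exists2 d, 0 < d & P t d) ->
  exists2 d, 0 < d & forall t, t \in s -> P t d.
Proof.
move=> mono H.
have m2 : forall t e e', 0 < e' -> e' <= e -> (t \in s -> P t e) -> (t \in s -> P t e').
  by move=> t e e' h1 h2 h3 h4; apply: (mono _ e) => //; apply: h3.
have H2 : forall t, List.In t s -> exists2 e, 0 < e & (t \in s -> P t e).
  move=> t _; case: (boolP (t \in s)) => ts.
    by have [e ep He] := H t ts; exists e.
  by exists 1.
have [d dp Hd] := @fin_delta _ s (fun t e => t \in s -> P t e) m2 H2.
exists d => // t ts; apply: Hd => //; exact: In_mem.
Qed.

Lemma abs_lt_all0 (x : R) : (forall e, 0 < e -> `|x| < e) -> x = 0.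
Proof.
move=> H; apply/eqP; case: (eqVneq x 0) => // hx; exfalso.
have := H `|x|; rewrite normr_gt0 hx ltxx; by move=> /(_ isT).
Qed.

Variable r : nat.
Notation V := 'rV[R]_r.

Definition n1 (v : V) : R := \sum_i `|v 0 i|.

Lemma dotvD (u x y : V) : dotv u (x + y) = dotv u x + dotv u y.
Proof. by rewrite /dotv -big_split; apply: eq_bigr => i _; rewrite mxE mulrDr. Qed.
Lemma dotvZ (u x : V) t : dotv u (t *: x) = t * dotv u x.
Proof. by rewrite /dotv mulr_sumr; apply: eq_bigr => i _; rewrite mxE mulrCA. Qed.
Lemma dotv0 (u : V) : dotv u 0 = 0.
Proof. by rewrite /dotv big1 // => i _; rewrite mxE mulr0. Qed.
Lemma dotvN (u x : V) : dotv u (- x) = - dotv u x.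
Proof. by rewrite -scaleN1r dotvZ mulN1r. Qed.
Lemma dotvB (u x y : V) : dotv u (x - y) = dotv u x - dotv u y.
Proof. by rewrite dotvD dotvN. Qed.

Lemma n1_0 : n1 0 = 0.
Proof. by rewrite /n1 big1 // => i _; rewrite mxE normr0. Qed.

Lemma n1_ge0 (v : V) : 0 <= n1 v.
Proof. by apply: sumr_ge0 => i _. Qed.
Lemma coord_le_n1 (v : V) i : `|v 0 i| <= n1 v.
Proof. by rewrite /n1 (bigD1 i) //= lerDl sumr_ge0. Qed.
Lemma n1D (x y : V) : n1 (x + y) <= n1 x + n1 y.
Proof. by rewrite /n1 -big_split ler_sum // => i _; rewrite mxE ler_normD. Qed.
Lemma n1Z t (x : V) : n1 (t *: x) = `|t| * n1 x.
Proof. by rewrite /n1 mulr_sumr; apply: eq_bigr => i _; rewrite mxE normrM. Qed.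
Lemma n1N (x : V) : n1 (- x) = n1 x.
Proof. by rewrite -scaleN1r n1Z normrN normr1 mul1r. Qed.
Lemma n1B (x y : V) : n1 (x - y) = n1 (y - x).
Proof. by rewrite -n1N opprB. Qed.

Lemma dotv_le (u x : V) : `|dotv u x| <= n1 u * n1 x.
Proof.
rewrite /dotv (le_trans (ler_norm_sum _ _ _)) // /n1 mulr_sumr ler_sum // => i _.
by rewrite normrM; apply: ler_wpM2r => //; exact: (coord_le_n1 u i).
Qed.

Lemma n1_near d (x y : V) : near_v d x y -> n1 (x - y) <= r%:R * d.
Proof.
move=> H; have -> : r%:R * d = \sum_(i < r) d by rewrite sumr_const card_ord mulr_natl.
rewrite /n1 ler_sum // => i _.
by rewrite !mxE ltW.
Qed.

Lemma near_sym d (x y : V) : near_v d x y -> near_v d y x.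
Proof. by move=> H i; rewrite distrC. Qed.

Lemma near_mono d d' (x y : V) : d <= d' -> near_v d x y -> near_v d' x y.
Proof. by move=> h H i; apply: lt_le_trans (H i) h. Qed.

Lemma near_tri d d' (x y z : V) : near_v d x y -> near_v d' y z -> near_v (d + d') x z.
Proof.
move=> H1 H2 i; rewrite (_ : x 0 i - z 0 i = (x 0 i - y 0 i) + (y 0 i - z 0 i)); last by rewrite addrA subrK.
by rewrite (le_lt_trans (ler_normD _ _)) // ltrD.
Qed.

Lemma dotv_near (u x y : V) d : near_v d x y -> `|dotv u x - dotv u y| <= n1 u * (r%:R * d).
Proof.
move=> H; rewrite -dotvB (le_trans (dotv_le _ _)) // ler_wpM2l ?n1_ge0 //.
exact: n1_near.
Qed.

End Basic.
Section Geom.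
Variable R : realType.
Variable r : nat.
Notation V := 'rV[R]_r.

Lemma polycone_add (C : V -> Prop) x y : polycone C -> C x -> C y -> C (x + y).
Proof.
move=> [s Hs] /Hs hx /Hs hy; apply/Hs => u us; rewrite dotvD addr_ge0 //; [exact: hx|exact: hy].
Qed.

Lemma polycone_scale (C : V -> Prop) x t : polycone C -> C x -> 0 <= t -> C (t *: x).
Proof. by move=> [s Hs] /Hs hx t0; apply/Hs => u us; rewrite dotvZ mulr_ge0 //; exact: hx. Qed.

Lemma polycone_open_compl (C : V -> Prop) x : polycone C -> ~ C x ->
  exists2 d, 0 < d & forall z, near_v d x z -> ~ C z.
Proof.
move=> [s Hs] nC.
case: (boolP (all (fun u => 0 <= dotv u x) s)) => hall.
  by exfalso; apply: nC; apply/Hs => u us; move/allP: hall => /(_ u us).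
move/allPn: hall => [u us]; rewrite -ltNge => hu.
set k := n1 u * r%:R + 1.
have kp : 0 < k by rewrite /k ltr_pwDr // mulr_ge0 // n1_ge0.
exists (- dotv u x / k); first by rewrite divr_gt0 // oppr_gt0.
move=> z hz /Hs /(_ u us) hz0.
have := dotv_near u hz; rewrite mulrA -/k.
have -> : n1 u * r%:R = k - 1 by rewrite /k addrK.
move=> h; have h2 : dotv u z - dotv u x <= (k - 1) * (- dotv u x / k).
  by apply: le_trans h; rewrite distrC ler_norm.
have : (k - 1) * (- dotv u x / k) < - dotv u x.
  rewrite mulrBl mul1r mulrCA divff ?gt_eqF // mulr1 ltrBlDr ltrDl divr_gt0 // oppr_gt0 //.
move=> h3; have := le_lt_trans h2 h3; rewrite ltrBlDr addNr; by rewrite ltNge hz0.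
Qed.

Lemma sub_ball (y z : V) rho : near_v rho y z ->
  exists2 rho', 0 < rho' & forall w, near_v rho' z w -> near_v rho y w.
Proof.
move=> H.
have Hex : forall i : 'I_r, exists2 e, 0 < e & e <= rho - `|y 0 i - z 0 i|.
  by move=> i; exists (rho - `|y 0 i - z 0 i|) => //; rewrite subr_gt0.
have [d dp Hd] := @fin_delta_fin R 'I_r (fun i e => e <= rho - `|y 0 i - z 0 i|)
   (fun t e e' _ h1 h2 => le_trans h1 h2) Hex.
exists d => // w hw i.
rewrite (_ : y 0 i - w 0 i = (y 0 i - z 0 i) + (z 0 i - w 0 i)); last by rewrite addrA subrK.
apply: (le_lt_trans (ler_normD _ _)).
by rewrite -ltrBrDl (lt_le_trans (hw i)) // Hd.
Qed.

Lemma baire (l : list (V -> Prop)) (Q : (V -> Prop) -> Prop) :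
  (forall A, List.In A l -> polycone A) ->
  forall (U : V -> Prop) y rho, 0 < rho -> (forall w, near_v rho y w -> U w) ->
  (forall z, U z -> exists A, [/\ List.In A l, Q A & A z]) ->
  exists A y' rho', [/\ List.In A l, Q A, 0 < rho' & forall w, near_v rho' y' w -> U w /\ A w].
Proof.
elim: l => [|A l IH] Hp U y rho rp Hb Hc.
  have yy : near_v rho y y by move=> i; rewrite subrr normr0.
  by have [A [[]]] := Hc y (Hb y yy).
have Hp' : forall A0, List.In A0 l -> polycone A0 by move=> A0 h; apply: Hp; right.
case: (classic (Q A)) => qA; last first.
  have Hc' : forall z, U z -> exists A0, [/\ List.In A0 l, Q A0 & A0 z].
    move=> z hz; have [A0 [[e|i] q a]] := Hc z hz; last by exists A0.
    by exfalso; apply: qA; rewrite e.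
  have [A2 [y2 [rho2 [h1 h2 h3 h4]]]] := IH Hp' U y rho rp Hb Hc'.
  by exists A2, y2, rho2; split => //; right.
case: (classic (forall w, near_v rho y w -> A w)) => hA.
  by exists A, y, rho; split => //; [left | move=> w hw; split; [exact: Hb | exact: hA]].
have [z hz] : exists z, near_v rho y z /\ ~ A z.
  apply: NNPP => h; apply: hA => w hw; apply: NNPP => hnA; apply: h; by exists w.
case: hz => hyz hnz.
have [r1 r1p Hr1] := sub_ball hyz.
have [r2 r2p Hr2] := polycone_open_compl (Hp A (or_introl erefl)) hnz.
set r3 := Num.min r1 r2.
have r3p : 0 < r3 by rewrite lt_min r1p r2p.
have Hc' : forall w, near_v r3 z w -> exists A0, [/\ List.In A0 l, Q A0 & A0 w].
  move=> w hw.
  have hw1 : near_v r1 z w by apply: near_mono hw; rewrite ge_min lexx.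
  have hw2 : near_v r2 z w by apply: near_mono hw; rewrite ge_min lexx orbT.
  have [A0 [[e|i] q a]] := Hc w (Hb w (Hr1 w hw1)); last by exists A0.
  by exfalso; apply: (Hr2 w hw2); rewrite e.
have [A2 [y2 [rho2 [h1 h2 h3 h4]]]] := IH Hp' (fun w => near_v r3 z w) z r3 r3p (fun w h => h) Hc'.
exists A2, y2, rho2; split => //; first by right.
move=> w hw; have [hw1 hw2] := h4 w hw; split => //.
apply: Hb; apply: Hr1; apply: near_mono hw1; by rewrite ge_min lexx.
Qed.

End Geom.
Section Geom2.
Variable R : realType.
Variable r : nat.
Notation V := 'rV[R]_r.
Variable I : finType.
Variable Phi : I -> list (V -> Prop).
Hypothesis Hfan : forall b, complete_fan (Phi b).

Lemma fan_poly b A : List.In A (Phi b) -> polycone A.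
Proof. by have [[h _] _] := Hfan b; apply: h. Qed.

Lemma step1 x0 : exists2 d, 0 < d & forall b z, near_v d x0 z ->
  exists A, [/\ List.In A (Phi b), A x0 & A z].
Proof.
have H : forall b, exists2 d, 0 < d & forall z, near_v d x0 z ->
  exists A, [/\ List.In A (Phi b), A x0 & A z].
  move=> b.
  have H2 : forall A, List.In A (Phi b) -> exists2 d, 0 < d & (~ A x0 -> forall z, near_v d x0 z -> ~ A z).
    move=> A hA; case: (classic (A x0)) => hx; first by exists 1.
    have [d dp Hd] := polycone_open_compl (fan_poly hA) hx.
    by exists d.
  have [d dp Hd] := fin_delta (fun A e e' _ h1 h2 hn z hz => h2 hn z (near_mono h1 hz)) H2.
  exists d => // z hz.
  have [_ Hcov] := Hfan b; have [A hA Az] := Hcov z.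
  exists A; split => //; apply: NNPP => hn.
  exact: (Hd A hA hn z hz).
have [d dp Hd] := fin_delta_fin
  (fun b e e' _ h1 h2 z hz => h2 z (near_mono h1 hz)) H.
by exists d.
Qed.

Definition good x0 y rho b (A : V -> Prop) :=
  [/\ List.In A (Phi b), A x0 & forall w, near_v rho y w -> A w].

Lemma step2 x0 : exists y rho, 0 < rho /\ forall b, exists A, good x0 y rho b A.
Proof.
have [d dp Hd] := step1 x0.
suff : forall bs : seq I, exists y rho, [/\ 0 < rho, (forall w, near_v rho y w -> near_v d x0 w) &
   forall b, List.In b bs -> exists A, good x0 y rho b A].
  move=> /(_ (enum I)) [y [rho [h1 h2 h3]]]; exists y, rho; split => // b.
  by apply: h3; apply: In_mem; rewrite mem_enum.
elim => [|b bs [y [rho [h1 h2 h3]]]].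
  exists x0, d; split => //.
have Hc : forall z, near_v rho y z -> exists A, [/\ List.In A (Phi b), A x0 & A z].
  by move=> z hz; apply: Hd; apply: h2.
have [A [y' [rho' [k1 k2 k3 k4]]]] := baire (@fan_poly b) (Q := fun A => A x0) h1 (fun w h => h) Hc.
exists y', rho'; split => //.
  by move=> w hw; apply: h2; exact: (k4 w hw).1.
move=> b' [<-|hb']; first by exists A; split => // w hw; exact: (k4 w hw).2.
have [A' [a1 a2 a3]] := h3 b' hb'.
exists A'; split => // w hw; apply: a3; exact: (k4 w hw).1.
Qed.

Lemma face_arg (C0 : V -> Prop) x0 (D : V -> Prop) b A :
  List.In D (Phi b) -> List.In A (Phi b) -> (forall x, C0 x -> D x) ->
  C0 x0 -> (forall c, C0 c -> exists2 s, 0 < s & C0 (x0 - s *: c)) ->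
  A x0 -> forall c, C0 c -> A c.
Proof.
move=> hD hA hC0 c0 rel Ax0 c Cc.
have [[_ [_ h3]] _] := Hfan b.
have [_ [u [hu1 hu2]]] := h3 A D hA hD.
have ux0 : dotv u x0 = 0 by have [] := (hu2 x0).1 (conj Ax0 (hC0 _ c0)).
have [s sp hs] := rel c Cc.
have h1 := hu1 _ (hC0 _ hs); rewrite dotvB dotvZ ux0 sub0r oppr_ge0 in h1.
have h2 := hu1 _ (hC0 _ Cc).
have uc : dotv u c = 0.
  by apply/eqP; rewrite eq_le h2 andbT -(pmulr_rle0 _ sp).
by have [] := (hu2 c).2 (conj (hC0 _ Cc) uc).
Qed.

End Geom2.
Section Relint.
Variable R : realType.
Variable r : nat.
Notation V := 'rV[R]_r.

Lemma relint_ex (L : seq V) : exists x0, cone_of L x0 /\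
  forall c, cone_of L c -> exists2 s, 0 < s & cone_of L (x0 - s *: c).
Proof.
have A : forall L' : seq V, {subset L' <= L} -> exists x0, cone_of L x0 /\
   forall u, u \in L' -> (exists c, cone_of L c /\ 0 < dotv u c) -> 0 < dotv u x0.
  elim => [|u L' IH] sub.
    by exists 0; split => // u _; rewrite dotv0.
  have [x0 [hx0 hp]] := IH (fun v h => sub v (@mem_behead _ (u :: L') v h)).
  case: (classic (exists c, cone_of L c /\ 0 < dotv u c)) => hc.
    have [c [cc uc]] := hc.
    exists (x0 + c); split.
      by move=> v vL; rewrite dotvD addr_ge0 //; [apply: hx0|apply: cc].
    move=> v; rewrite inE => /orP [/eqP ->|vL'] hv.
      by rewrite dotvD ltr_pwDr // hx0 // sub // mem_head.
    rewrite dotvD; apply: (lt_le_trans (hp v vL' hv)); rewrite lerDl.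
    by apply: cc; apply: sub; rewrite inE vL' orbT.
  exists x0; split => // v; rewrite inE => /orP [/eqP ->|vL'] h; first by exfalso.
  by apply: hp.
have [x0 [hx0 hp]] := A L (fun u h => h).
exists x0; split => // c cc.
have H : forall u, u \in L -> exists2 s, 0 < s & s * dotv u c <= dotv u x0.
  move=> u uL; case: (ltP 0 (dotv u c)) => uc.
    have ux : 0 < dotv u x0 by apply: hp => //; exists c.
    exists (dotv u x0 / dotv u c); first by rewrite divr_gt0.
    by rewrite divfK ?gt_eqF.
  exists 1 => //; rewrite mul1r; apply: le_trans uc _; exact: hx0.
have mono : forall u e e', 0 < e' -> e' <= e ->
    (u \in L -> e * dotv u c <= dotv u x0) -> (u \in L -> e' * dotv u c <= dotv u x0).
  move=> u e e' _ h1 h2 uL; apply: le_trans (h2 uL).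
  by apply: ler_wpM2r => //; apply: cc.
have [s sp Hs] := fin_delta_seq (P := fun u s => u \in L -> s * dotv u c <= dotv u x0)
  mono (fun u uL => let: ex_intro2 e h1 h2 := H u uL in ex_intro2 _ _ e h1 (fun _ => h2)).
exists s => // u uL; rewrite dotvB dotvZ subr_ge0; exact: Hs.
Qed.

End Relint.
Section Points.
Variable R : realType.
Variable r : nat.
Notation V := 'rV[R]_r.
Variable I : finType.
Variable mu : I -> I -> V -> V.

Section Ring.
Variable F : R -> Prop.
Hypothesis hF : is_subring F.

Lemma F1 : F 1. Proof. by case: hF. Qed.
Lemma FB x y : F x -> F y -> F (x - y). Proof. by case: hF => _ [h _]; apply: h. Qed.
Lemma FM x y : F x -> F y -> F (x * y). Proof. by case: hF => _ [_ h]; apply: h. Qed.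
Lemma F0 : F 0. Proof. by rewrite -(subrr 1); apply: FB; apply: F1. Qed.
Lemma FN x : F x -> F (- x). Proof. by move=> h; rewrite -sub0r; apply: FB => //; apply: F0. Qed.
Lemma FD x y : F x -> F y -> F (x + y). Proof. by move=> hx hy; rewrite -(opprK y); apply: FB => //; apply: FN. Qed.
Lemma Fnat n : F n%:R.
Proof. elim: n => [|n IH]; first exact: F0. by rewrite -addn1 natrD; apply: FD => //; apply: F1. Qed.
Lemma Fint (z : int) : F z%:~R.
Proof. by case: z => n; [exact: Fnat | rewrite NegzE mulrNz; apply: FN; exact: Fnat]. Qed.
Lemma Fsum (J : Type) (s : seq J) (P : pred J) (g : J -> R) :
  (forall j, P j -> F (g j)) -> F (\sum_(j <- s | P j) g j).
Proof. by move=> h; apply: big_ind => //; [apply: F0 | apply: FD]. Qed.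
Lemma Fabs x : F x -> F `|x|.
Proof. by move=> h; case: (ler0P x) => _ //; apply: FN. Qed.
Lemma Fdot (u v : V) : inFv F u -> inFv F v -> F (dotv u v).
Proof. by move=> hu hv; apply: Fsum => i _; apply: FM. Qed.
Lemma inFv0 : inFv F (0 : V). Proof. by move=> i; rewrite mxE; apply: F0. Qed.
Lemma inFvD (u v : V) : inFv F u -> inFv F v -> inFv F (u + v).
Proof. by move=> hu hv i; rewrite mxE; apply: FD. Qed.
Lemma inFvN (u : V) : inFv F u -> inFv F (- u).
Proof. by move=> hu i; rewrite mxE; apply: FN. Qed.
Lemma inFvB (u v : V) : inFv F u -> inFv F v -> inFv F (u - v).
Proof. by move=> hu hv; apply: inFvD => //; apply: inFvN. Qed.
Lemma inFvZ t (u : V) : F t -> inFv F u -> inFv F (t *: u).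
Proof. by move=> ht hu i; rewrite mxE; apply: FM. Qed.
Lemma inFv_e i : inFv F ('e_i : V).
Proof. by move=> j; rewrite mxE; case: (_ && _); [apply: F1|apply: F0]. Qed.
Lemma inFv_mul (v : V) (B : 'M[R]_r) : inFv F v -> (forall i j, F (B i j)) -> inFv F (v *m B).
Proof. by move=> hv hB j; rewrite mxE; apply: Fsum => i _; apply: FM. Qed.
End Ring.


Section Mu.
Variable F : R -> Prop.
Hypothesis hF : is_subring F.
Hypothesis hmu : is_polyptych F mu.

Lemma mu_id a x : mu a a x = x. Proof. by case: hmu => _ [h _]. Qed.
Lemma mu_inv a b x : mu b a (mu a b x) = x. Proof. by case: hmu => _ [_ [h _]]; case: (h a b x). Qed.
Lemma mu_comp a b c x : mu b c (mu a b x) = mu a c x. Proof. by case: hmu => _ [_ [_ h]]. Qed.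
Lemma mu_PL a b : PL F (mu a b). Proof. by case: hmu. Qed.
Lemma mu_cont a b : contV (mu a b). Proof. by case: (mu_PL a b). Qed.

Lemma mu_Fpt (G : R -> Prop) : is_subring G -> (forall x, F x -> G x) ->
  forall a b v, inFv G v -> inFv G (mu a b v).
Proof.
move=> hG FG a b v hv; have [_ [Phi [[_ Hcov] H]]] := mu_PL a b.
have [C hC Cv] := Hcov v; have [_ [B [hB HB]]] := H C hC.
rewrite HB //; apply: inFv_mul => // i j; exact: FG.
Qed.

Lemma mu_hom a b t v : 0 <= t -> mu a b (t *: v) = t *: mu a b v.
Proof.
move=> t0; have [_ [Phi [[[Hp _] Hcov] H]]] := mu_PL a b.
have [C hC Cv] := Hcov v; have [_ [B [hB HB]]] := H C hC.
rewrite !HB //; first by rewrite scalemxAl.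
exact: polycone_scale (Hp C hC) Cv t0.
Qed.

Lemma mu0 a b : mu a b 0 = 0.
Proof. by have := @mu_hom a b 0 0 (lexx 0); rewrite !scale0r. Qed.

Lemma mu_fan a b : exists Phi, complete_fan Phi /\ forall C, List.In C Phi -> lin_on (mu a b) C.
Proof.
have [_ [Phi [hc H]]] := mu_PL a b; exists Phi; split => // C hC.
by have [_ [B [_ HB]]] := H C hC; exists B.
Qed.

Lemma pinv_mu a b v : pinv mu b (mu a b v) = pinv mu a v.
Proof. by apply: functional_extensionality => c; rewrite /pinv mu_comp. Qed.

Lemma elems_pinv_gen (m : I -> V) a : (forall a b, m b = mu a b (m a)) -> m = pinv mu a (m a).
Proof. by move=> h; apply: functional_extensionality => b; rewrite /pinv -h. Qed.

Lemma elems_pinv (G : R -> Prop) : is_subring G -> (forall x, F x -> G x) ->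
  forall a v, inFv G v -> elems G mu (pinv mu a v).
Proof.
move=> hG FG a v hv; split => [b c|b]; first by rewrite /pinv mu_comp.
by rewrite /pinv; apply: (mu_Fpt hG FG).
Qed.

Lemma addA_pinv a u v : addA mu a (pinv mu a u) (pinv mu a v) = pinv mu a (u + v).
Proof. by rewrite /addA /pinv !mu_id. Qed.

Lemma scaleA_pinv a l v : scaleA mu a l (pinv mu a v) = pinv mu a (l *: v).
Proof. by rewrite /scaleA /pinv !mu_id. Qed.

End Mu.

End Points.
Section Fun.
Variable R : realType.
Variable r : nat.
Notation V := 'rV[R]_r.
Variable I : finType.
Variable mu : I -> I -> V -> V.
Variable F : R -> Prop.
Hypothesis hF : is_subring F.
Hypothesis hmu : is_polyptych F mu.
Variable p : (I -> V) -> R.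
Hypothesis hp : is_point F mu p.

Definition f a v := p (pinv mu a v).

Lemma FF x : F x -> F x. Proof. by []. Qed.
Lemma Fpinv a v : inFv F v -> elems F mu (pinv mu a v).
Proof. exact: (elems_pinv hmu hF FF). Qed.

Lemma fF a v : inFv F v -> F (f a v).
Proof. by move=> hv; case: hp => h _; apply: h; apply: Fpinv. Qed.

Lemma f_super a u v : inFv F u -> inFv F v -> f a u + f a v <= f a (u + v).
Proof.
move=> hu hv; case: hp => _ [h _]; have [_ h2] := h _ _ (Fpinv a hu) (Fpinv a hv).
by have := h2 a; rewrite (addA_pinv hmu).
Qed.

Lemma f_hom a l v : F l -> 0 <= l -> inFv F v -> f a (l *: v) = l * f a v.
Proof.
move=> hl l0 hv; case: hp => _ [_ h]; have := h l _ a hl l0 (Fpinv a hv).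
by rewrite (scaleA_pinv hmu).
Qed.

Lemma f_zero a : f a 0 = 0.
Proof. by have := @f_hom a 0 0 (F0 hF) (lexx 0) (inFv0 hF); rewrite scale0r mul0r. Qed.

Lemma f_chart a b v : f a (mu b a v) = f b v.
Proof. by rewrite /f (pinv_mu hmu). Qed.

Lemma f_add_region a v1 v2 : inFv F v1 -> inFv F v2 ->
  (forall b, mu a b (v1 + v2) = mu a b v1 + mu a b v2) -> f a v1 + f a v2 = f a (v1 + v2).
Proof.
move=> h1 h2 hl; case: hp => _ [h _]; have [[b hb] _] := h _ _ (Fpinv a h1) (Fpinv a h2).
rewrite /f hb /addA /pinv /=; congr p; apply: functional_extensionality => c.
by rewrite -hl (mu_comp hmu).
Qed.

Lemma int_point (T : V -> Prop) y rho : 0 < rho -> (forall w, near_v rho y w -> T w) ->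
  (forall x t, T x -> 0 <= t -> T (t *: x)) ->
  exists w rho', [/\ inFv F w, 0 < rho' & forall u, near_v rho' w u -> T u].
Proof.
move=> rp Hb Hs.
set N := Num.Def.archi_bound (2 / rho).
have hN : 2 / rho < N%:R by apply: archi_boundP; rewrite divr_ge0 // ltW.
have Np : (0 : R) < N%:R by apply: lt_trans hN; rewrite divr_gt0.
have hN2 : N%:R^-1 < rho / 2.
  by rewrite invf_plt ?posrE ?divr_gt0 // invf_div.
set w : V := \row_i ((Num.floor (N%:R * y 0 i))%:~R).
exists w, (N%:R * (rho / 2)); split.
- by move=> i; rewrite mxE; apply: (Fint hF).
- by rewrite mulr_gt0 // divr_gt0.
move=> u hu.
have -> : u = N%:R *: (N%:R^-1 *: u) by rewrite scalerA divff ?gt_eqF // scale1r.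
apply: Hs (ltW Np); apply: Hb => i.
have e1 : `|y 0 i - N%:R^-1 * w 0 i| < rho / 2.
  apply: lt_trans hN2.
  rewrite mxE (_ : y 0 i - _ = N%:R^-1 * (N%:R * y 0 i - (Num.floor (N%:R * y 0 i))%:~R)); last first.
    by rewrite mulrBr mulKf ?gt_eqF.
  rewrite normrM gtr0_norm ?invr_gt0 // gtr_pMr ?invr_gt0 //.
  have := floor_itv (N%:R * y 0 i); rewrite intrD => /andP [h1 h2].
  rewrite ger0_norm ?subr_ge0 // ltrBlDl; apply: (lt_le_trans h2); by rewrite addrC.
have e2 : `|N%:R^-1 * w 0 i - (N%:R^-1 *: u) 0 i| < rho / 2.
  rewrite [(_ *: u) 0 i]mxE -mulrBr normrM gtr0_norm ?invr_gt0 // mulrC ltr_pdivrMr // mulrC.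
  exact: hu.
rewrite (_ : y 0 i - _ = (y 0 i - N%:R^-1 * w 0 i) + (N%:R^-1 * w 0 i - (N%:R^-1 *: u) 0 i)); last by rewrite addrA subrK.
apply: (le_lt_trans (ler_normD _ _)); rewrite (splitr rho); exact: ltrD.
Qed.


Lemma f_nat a n v : inFv F v -> f a (n%:R *: v) = n%:R * f a v.
Proof. by move=> hv; apply: f_hom => //; apply: (Fnat hF). Qed.

Lemma f_sum_region a (T : V -> Prop) (J : Type) (s : seq J) (g : J -> V) :
  T 0 -> (forall x z, T x -> T z -> T (x + z)) ->
  (forall v1 v2, inFv F v1 -> inFv F v2 -> T v1 -> T v2 -> f a v1 + f a v2 = f a (v1 + v2)) ->
  (forall j, inFv F (g j) /\ T (g j)) ->
  f a (\sum_(j <- s) g j) = \sum_(j <- s) f a (g j).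
Proof.
move=> T0 TD Hadd Hg.
suff [_ _ ->] : [/\ inFv F (\sum_(j <- s) g j), T (\sum_(j <- s) g j)
   & f a (\sum_(j <- s) g j) = \sum_(j <- s) f a (g j)] by [].
apply: (@big_ind2 V R (fun x y => [/\ inFv F x, T x & f a x = y]) 0 +%R 0 +%R).
- by split => //; [apply: (inFv0 hF) | apply: f_zero].
- move=> x1 x2 y1 y2 [h1 h2 <-] [h3 h4 <-]; split; [exact: (inFvD hF)|exact: TD|].
  by rewrite Hadd.
- by move=> j _; have [h1 h2] := Hg j.
Qed.

Lemma lin_ext a (T : V -> Prop) y rho : 0 < rho -> (forall w, near_v rho y w -> T w) ->
  (forall x z, T x -> T z -> T (x + z)) -> (forall x t, T x -> 0 <= t -> T (t *: x)) ->
  (forall v1 v2, inFv F v1 -> inFv F v2 -> T v1 -> T v2 -> f a v1 + f a v2 = f a (v1 + v2)) ->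
  exists c, inFv F c /\ forall v, inFv F v -> T v -> f a v = dotv c v.
Proof.
move=> rp Hb TD TS Hadd.
have [w [rho' [wF rp' Hw]]] := int_point rp Hb TS.
have T0 : T 0 by rewrite -(scale0r y); apply: TS (lexx 0); apply: Hb => i; rewrite subrr normr0.
have Tw : T w by apply: Hw => i; rewrite subrr normr0.
set M := Num.Def.archi_bound (1 / rho').
have hM : 1 / rho' < M%:R by apply: archi_boundP; rewrite divr_ge0 // ltW.
have Mp : (0 : R) < M%:R by apply: lt_trans hM; rewrite divr_gt0.
have hM2 : M%:R^-1 < rho' by rewrite invf_plt ?posrE // -div1r.
have Tpm : forall (s : R) i, `|s| <= 1 -> T (s *: 'e_i + M%:R *: w).
  move=> s i hs.
  have -> : s *: 'e_i + M%:R *: w = M%:R *: (w + M%:R^-1 *: (s *: 'e_i)).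
    by rewrite scalerDr scalerA divff ?gt_eqF // scale1r addrC.
  apply: TS (ltW Mp); apply: Hw => j; rewrite !mxE opprD addNKr normrN.
  rewrite normrM gtr0_norm ?invr_gt0 // (le_lt_trans _ hM2) // ger_pMr ?invr_gt0 //.
  rewrite normrM (le_trans (ler_wpM2r _ hs)) // mul1r.
  by case: (_ && _); rewrite ?normr1 ?normr0.
set c : V := \row_i (f a ('e_i + M%:R *: w) - M%:R * f a w).
have FMw : inFv F (M%:R *: w) by apply: (inFvZ hF) => //; apply: (Fnat hF).
have eF : forall (s : R) i, F s -> inFv F (s *: 'e_i + M%:R *: w).
  by move=> s i hs; apply: (inFvD hF) => //; apply: (inFvZ hF) => //; apply: (inFv_e hF).
have cF : inFv F c.
  move=> i; rewrite mxE; apply: (FB hF) => //; first apply: fF.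
    by rewrite -[X in X + _]scale1r; apply: eF; apply: (F1 hF).
  by apply: (FM hF); [apply: (Fnat hF)|apply: fF].
have Hpos : forall i, f a ('e_i + M%:R *: w) = c 0 i + M%:R * f a w.
  by move=> i; rewrite mxE subrK.
have Hneg : forall i, f a (- 'e_i + M%:R *: w) = - c 0 i + M%:R * f a w.
  move=> i.
  have n1' : `|(-1 : R)| <= 1 by rewrite normrN normr1.
  have n1'' : `|(1 : R)| <= 1 by rewrite normr1.
  have h := Hadd _ _ (eF _ i (FN hF (F1 hF))) (eF _ i (F1 hF)) (Tpm (-1) i n1') (Tpm 1 i n1'').
  rewrite !scaleN1r !scale1r in h.
  rewrite (_ : - 'e_i + M%:R *: w + ('e_i + M%:R *: w) = (M + M)%:R *: w) in h; last first.
    by rewrite addrACA addNr add0r natrD scalerDl.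
  rewrite f_nat // Hpos natrD in h.
  lra.
exists c; split => // v hv Tv.
set K := M%:R * n1 v.
have KF : F K by apply: (FM hF); [apply: (Fnat hF) | apply: (Fsum hF) => i _; apply: (Fabs hF)].
have K0 : 0 <= K by rewrite mulr_ge0 // n1_ge0.
have TKw : T (K *: w) by apply: TS.
have h1 : f a (v + K *: w) = f a v + K * f a w.
  by rewrite -Hadd //; [rewrite f_hom | apply: (inFvZ hF)].
set t := fun i : 'I_r => (if 0 <= v 0 i then 1 else -1 : R).
have tE : forall i, `|v 0 i| * t i = v 0 i.
  by move=> i; rewrite /t; case: ifP => h; [rewrite mulr1 ger0_norm | rewrite mulrN1 ltr0_norm ?opprK // ltNge h].
have tF : forall i, F (t i) by move=> i; rewrite /t; case: ifP => _; [apply: (F1 hF) | apply: (FN hF); apply: (F1 hF)].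
have t1 : forall i, `|t i| <= 1 by move=> i; rewrite /t; case: ifP => _; rewrite ?normrN normr1.
have decomp : v + K *: w = \sum_(i < r) `|v 0 i| *: (t i *: 'e_i + M%:R *: w).
  rewrite [X in X + _]row_sum_delta /K.
  under [RHS]eq_bigr => i _ do rewrite scalerDr scalerA tE scalerA.
  rewrite big_split /=; congr (_ + _).
  by rewrite -scaler_suml mulr_sumr /n1; congr (_ *: _); apply: eq_bigr => i _; rewrite mulrC.
have h2 : f a (v + K *: w) = \sum_(i < r) `|v 0 i| * f a (t i *: 'e_i + M%:R *: w).
  rewrite decomp (f_sum_region _ T0 TD Hadd).
    by apply: eq_bigr => i _; rewrite f_hom //; [apply: (Fabs hF); apply: hv | apply: eF].
  move=> i; split; first by apply: (inFvZ hF); [apply: (Fabs hF); apply: hv | apply: eF].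
  by apply: TS => //; apply: Tpm.
have h3 : forall i, f a (t i *: 'e_i + M%:R *: w) = t i * c 0 i + M%:R * f a w.
  move=> i; rewrite /t; case: ifP => _; rewrite ?scale1r ?scaleN1r ?mul1r ?mulN1r.
    exact: Hpos.
  exact: Hneg.
have : f a v + K * f a w = dotv c v + K * f a w.
  rewrite -h1 h2; under eq_bigr => i _ do rewrite h3 mulrDr mulrA tE.
  rewrite big_split /= /dotv /K -mulr_suml; congr (_ + _).
    by apply: eq_bigr => i _; rewrite mulrC.
  by rewrite -/(n1 v) mulrCA mulrA.
by move=> h; lra.
Qed.
Section Base.
Variable z : I.

Definition Kc : R := \sum_(i < r) (`|f z 'e_i| + `|f z (- 'e_i)|).
Lemma Kc_ge0 : 0 <= Kc. Proof. by apply: sumr_ge0 => i _; rewrite addr_ge0. Qed.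

Lemma f_super_sum (J : Type) (s : seq J) (g : J -> V) :
  (forall j, inFv F (g j)) -> \sum_(j <- s) f z (g j) <= f z (\sum_(j <- s) g j).
Proof.
move=> Hg.
suff [_ ->] : inFv F (\sum_(j <- s) g j) /\ \sum_(j <- s) f z (g j) <= f z (\sum_(j <- s) g j) by [].
apply: (@big_ind2 R V (fun y x => inFv F x /\ y <= f z x) 0 +%R 0 +%R).
- by split; [apply: (inFv0 hF) | rewrite f_zero].
- move=> y1 x1 y2 x2 [h1 h2] [h3 h4]; split; first exact: (inFvD hF).
  by apply: le_trans (f_super _ h1 h3); apply: lerD.
- by move=> j _; split.
Qed.

Lemma f_lower w : inFv F w -> - (Kc * n1 w) <= f z w.
Proof.
move=> hw; rewrite [X in f z X]row_sum_delta.
apply: le_trans (f_super_sum _ (fun i => inFvZ hF (hw i) (inFv_e hF i))).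
have hK : forall i, `|f z 'e_i| + `|f z (- 'e_i)| <= Kc.
  by move=> i; rewrite /Kc (bigD1 i) //= lerDl sumr_ge0 // => j _; rewrite addr_ge0.
apply: le_trans (_ : - \sum_i `|w 0 i| * (`|f z 'e_i| + `|f z (- 'e_i)|) <= _).
  rewrite lerN2 /n1 mulr_sumr ler_sum // => i _; rewrite mulrC ler_wpM2r //.
rewrite -sumrN; apply: ler_sum => i _.
have n1 := normr_ge0 (f z 'e_i); have n2 := normr_ge0 (f z (- 'e_i)).
case: (leP 0 (w 0 i)) => h.
  rewrite f_hom //; last exact: (inFv_e hF).
  have := lerNnormlW (lexx `|w 0 i * f z 'e_i|); rewrite normrM ger0_norm // => h1.
  have h2 : w 0 i * `|f z (- 'e_i)| >= 0 by rewrite mulr_ge0.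
  rewrite mulrDr; lra.
have -> : (w 0 i *: 'e_i : V) = (- w 0 i) *: (- 'e_i) by rewrite scalerN scaleNr opprK.
rewrite f_hom //; first last.
- by apply: (inFvN hF); apply: (inFv_e hF).
- by rewrite oppr_ge0 ltW.
- by apply: (FN hF).
have := lerNnormlW (lexx `|- w 0 i * f z (- 'e_i)|); rewrite normrM normrN (ltr0_norm h) => h1.
have h2 : - w 0 i * `|f z 'e_i| >= 0 by rewrite mulr_ge0 // oppr_ge0 ltW.
rewrite mulrDr; lra.
Qed.

Lemma f_lip u v : inFv F u -> inFv F v -> f z v - f z u <= Kc * n1 (u - v).
Proof.
move=> hu hv.
have h := f_super z hv (inFvB hF hu hv); rewrite [v + _]addrC subrK in h.
have h2 := f_lower (inFvB hF hu hv).
lra.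
Qed.

Definition Dpt N (w : V) : V := N%:R^-1 *: w.

Lemma D_lip N N' w w' : (0 < N)%N -> (0 < N')%N -> inFv F w -> inFv F w' ->
  f z w / N%:R - f z w' / N'%:R <= Kc * n1 (Dpt N' w' - Dpt N w).
Proof.
move=> Np N'p hw hw'.
have Nr : (0 : R) < N%:R by rewrite ltr0n.
have N'r : (0 : R) < N'%:R by rewrite ltr0n.
have h := @f_lip (N%:R *: w') (N'%:R *: w) (inFvZ hF (Fnat hF _) hw') (inFvZ hF (Fnat hF _) hw).
rewrite !f_nat // in h.
have e : N%:R *: w' - N'%:R *: w = (N%:R * N'%:R) *: (Dpt N' w' - Dpt N w).
  rewrite /Dpt scalerBr !scalerA; congr (_ *: _ - _ *: _); field.
    by rewrite gt_eqF.
  by rewrite gt_eqF.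
rewrite e n1Z (ger0_norm (ltW (mulr_gt0 Nr N'r))) in h.
have NN : 0 < N%:R * N'%:R :> R by rewrite mulr_gt0.
rewrite -(ler_pM2r NN) mulrBl.
have -> : f z w / N%:R * (N%:R * N'%:R) = N'%:R * f z w by field; rewrite gt_eqF.
have -> : f z w' / N'%:R * (N%:R * N'%:R) = N%:R * f z w' by field; rewrite gt_eqF.
apply: le_trans h _; rewrite le_eqVlt; apply/orP; left; apply/eqP; ring.
Qed.

Definition Gset (x : V) : R -> Prop := fun t => exists N w,
  [/\ (0 < N)%N, inFv F w & t = f z w / N%:R - Kc * n1 (x - Dpt N w)].

Definition G (x : V) : R := sup (Gset x).

Lemma Gset_ub x N' w' t : (0 < N')%N -> inFv F w' -> Gset x t ->
  t <= f z w' / N'%:R + Kc * n1 (x - Dpt N' w').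
Proof.
move=> N'p hw' [N [w [Np hw ->]]].
have h := D_lip Np N'p hw hw'.
have h2 : n1 (Dpt N' w' - Dpt N w) <= n1 (x - Dpt N' w') + n1 (x - Dpt N w).
  rewrite (n1B x); apply: le_trans (n1D _ _); rewrite addrA subrK; exact: lexx.
have h3 := ler_wpM2l Kc_ge0 h2.
lra.
Qed.

Lemma Gset_sup x : classical_sets.has_sup (Gset x).
Proof.
split.
  exists (f z 0 / 1%:R - Kc * n1 (x - Dpt 1 0)); exists 1%N, 0; split => //; exact: (inFv0 hF).
exists (f z 0 / 1%:R + Kc * n1 (x - Dpt 1 0)) => t ht.
by apply: Gset_ub => //; exact: (inFv0 hF).
Qed.

Lemma G_D N w : (0 < N)%N -> inFv F w -> G (Dpt N w) = f z w / N%:R.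
Proof.
move=> Np hw; apply/eqP; rewrite eq_le; apply/andP; split.
  apply: ge_sup; first by have [] := Gset_sup (Dpt N w).
  move=> t ht; have := Gset_ub Np hw ht; by rewrite subrr n1_0 mulr0 addr0.
apply: sup_upper_bound; first exact: Gset_sup.
exists N, w; split => //; by rewrite subrr n1_0 mulr0 subr0.
Qed.

Lemma G_lip x y : G x <= G y + Kc * n1 (x - y).
Proof.
apply: ge_sup; first by have [] := Gset_sup x.
move=> t [N [w [Np hw ->]]].
have h : f z w / N%:R - Kc * n1 (y - Dpt N w) <= G y.
  by apply: sup_upper_bound; [exact: Gset_sup | exists N, w].
have h2 : n1 (x - Dpt N w) >= n1 (y - Dpt N w) - n1 (x - y).
  rewrite lerBlDr (n1B x y); apply: le_trans (n1D _ _); rewrite [(x - Dpt N w) + _]addrC addrA subrK; exact: lexx.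
have h3 := ler_wpM2l Kc_ge0 h2.
lra.
Qed.

Lemma G_lip_abs x y : `|G x - G y| <= Kc * n1 (x - y).
Proof.
rewrite ler_norml; have h1 := G_lip x y; have h2 := G_lip y x; rewrite n1B in h2.
apply/andP; split; lra.
Qed.

End Base.
Lemma G_cont_comp z (h : V -> V) : contV h -> forall x e, 0 < e ->
  exists2 d, 0 < d & forall y, near_v d x y -> `|G z (h x) - G z (h y)| < e.
Proof.
move=> hc x e ep.
have kp : 0 < Kc z * r%:R + 1 by rewrite ltr_pwDr // mulr_ge0 // Kc_ge0.
have [d dp Hd] := hc x (e / (Kc z * r%:R + 1)) (divr_gt0 ep kp).
exists d => // y hy; apply: le_lt_trans (G_lip_abs z _ _) _.
have h1 := n1_near (Hd y hy).
apply: le_lt_trans (ler_wpM2l (Kc_ge0 z) h1) _.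
rewrite mulrA mulrCA gtr_pMr // ltr_pdivrMr // mul1r; by rewrite ltrDl.
Qed.

Lemma D_dense (x : V) d : 0 < d -> exists N w, [/\ (0 < N)%N, inFv F w & near_v d x (Dpt N w)].
Proof.
move=> dp.
set N := Num.Def.archi_bound (1 / d).
have hN : 1 / d < N%:R by apply: archi_boundP; rewrite divr_ge0 // ltW.
have Np : (0 : R) < N%:R by apply: lt_trans hN; rewrite divr_gt0.
have hN2 : N%:R^-1 < d by rewrite invf_plt ?posrE // -div1r.
exists N, (\row_i ((Num.floor (N%:R * x 0 i))%:~R)); split.
- by rewrite -(ltr0n R).
- by move=> i; rewrite mxE; apply: (Fint hF).
move=> i; rewrite /Dpt !mxE.
rewrite (_ : x 0 i - _ = N%:R^-1 * (N%:R * x 0 i - (Num.floor (N%:R * x 0 i))%:~R)); last first.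
  by field; rewrite gt_eqF.
rewrite normrM gtr0_norm ?invr_gt0 //; apply: le_lt_trans hN2.
rewrite ger_pMr ?invr_gt0 //.
have := floor_itv (N%:R * x 0 i); rewrite intrD => /andP [h1 h2].
rewrite ger0_norm ?subr_ge0 //; rewrite lerBlDl; apply: ltW; apply: (lt_le_trans h2); by rewrite addrC.
Qed.

Lemma loc_lin z a (T : V -> Prop) y rho c : 0 < rho -> (forall w, near_v rho y w -> T w) ->
  (forall x w, T x -> T w -> T (x + w)) -> (forall x t, T x -> 0 <= t -> T (t *: x)) ->
  (forall v, inFv F v -> T v -> f a v = dotv c v) ->
  forall v, T v -> G z (mu a z v) = dotv c v.
Proof.
move=> rp Hb TD TS Hl.
have HD : forall N w, (0 < N)%N -> inFv F w -> T (Dpt N w) -> G z (mu a z (Dpt N w)) = dotv c (Dpt N w).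
  move=> N w Np hw hT.
  have Nr : (0 : R) < N%:R by rewrite ltr0n.
  have Tw : T w.
    have -> : w = N%:R *: Dpt N w by rewrite /Dpt scalerA divff ?gt_eqF // scale1r.
    by apply: TS => //; apply: ltW.
  rewrite /Dpt (mu_hom hmu) ?invr_ge0 ?ltW // -/(Dpt N (mu a z w)) G_D //; last first.
    exact: (mu_Fpt hmu hF FF).
  by rewrite f_chart Hl // dotvZ mulrC.
move=> v Tv; apply/eqP; rewrite -subr_eq0; apply/eqP; apply: abs_lt_all0 => e ep.
have [d1 d1p Hd1] := G_cont_comp z (mu_cont hmu a z) v (divr_gt0 ep (ltr0Sn R 1)).
have kp : 0 < n1 c * r%:R + 1 by rewrite ltr_pwDr // mulr_ge0 // n1_ge0.
set d2 := e / 2 / (n1 c * r%:R + 1).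
have d2p : 0 < d2 by rewrite divr_gt0 // divr_gt0.
set eps := Num.min d1 d2.
have epsp : 0 < eps by rewrite lt_min d1p d2p.
have yp : 0 < n1 y + rho + 1 by rewrite ltr_pwDr // addr_ge0 // ?n1_ge0 // ltW.
set t := eps / (n1 y + rho + 1).
have tp : 0 < t by rewrite divr_gt0.
set u0 := v + t *: y.
have Hu0 : forall u, near_v (t * rho) u0 u -> T u.
  move=> u hu.
  have -> : u = v + t *: (y + t^-1 *: (u - u0)).
    by rewrite scalerDr scalerA divff ?gt_eqF // scale1r /u0 addrA [_ + (u - _)]addrC subrK.
  apply: TD => //; apply: TS; last exact: ltW.
  apply: Hb => i; rewrite !mxE opprD addNKr normrN normrM gtr0_norm ?invr_gt0 //.
  rewrite ltr_pdivrMl // distrC; by have := hu i; rewrite /u0 !mxE.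
have [N [w [Np hw hnear]]] := D_dense u0 (mulr_gt0 tp rp).
have Td : T (Dpt N w) by apply: Hu0.
have hvd : near_v eps v (Dpt N w).
  move=> i; rewrite (_ : v 0 i - _ = (u0 0 i - (Dpt N w) 0 i) - t * y 0 i); last first.
    by rewrite /u0 !mxE addrAC addrK.
  apply: le_lt_trans (ler_normB _ _) _.
  rewrite normrM gtr0_norm //.
  have h1 := hnear i.
  have h2 : t * `|y 0 i| <= t * n1 y by apply: ler_wpM2l; [exact: ltW | exact: coord_le_n1].
  have h3 : t * (n1 y + rho + 1) = eps by rewrite /t mulfVK ?gt_eqF.
  have h4 : 0 < t by [].
  nra.
have hvd1 : near_v d1 v (Dpt N w) by apply: near_mono hvd; rewrite ge_min lexx.
have hvd2 : near_v d2 v (Dpt N w) by apply: near_mono hvd; rewrite ge_min lexx orbT.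
have e1 := Hd1 _ hvd1; rewrite (HD N w Np hw Td) in e1.
have e2 := dotv_near c hvd2.
have e3 : n1 c * (r%:R * d2) <= e / 2.
  rewrite mulrA /d2 mulrCA ger_pMr ?divr_gt0 // ler_pdivrMr // mul1r lerDl //.
have e4 := ler_normD (G z (mu a z v) - dotv c (Dpt N w)) (dotv c (Dpt N w) - dotv c v).
rewrite addrA subrK in e4.
rewrite distrC in e2.
lra.
Qed.
Lemma region (a0 : I) (Phi : I -> list (V -> Prop)) (C0 : V -> Prop) x0 (D : I -> V -> Prop) :
  (forall b, complete_fan (Phi b)) -> (forall b C, List.In C (Phi b) -> lin_on (mu a0 b) C) ->
  (forall b, List.In (D b) (Phi b)) -> (forall b x, C0 x -> D b x) -> C0 x0 ->
  (forall c, C0 c -> exists2 s, 0 < s & C0 (x0 - s *: c)) ->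
  forall a, exists c (T : V -> Prop), [/\ inFv F c, (forall x, C0 x -> T (mu a0 a x)),
    (forall v, inFv F v -> T v -> f a v = dotv c v),
    (forall z v, T v -> G z (mu a z v) = dotv c v) &
    (forall v t, T v -> 0 <= t -> T (t *: v))].
Proof.
move=> Hfan Hlin HD HC0 c0 rel a.
have [y [rho [rp Hgood]]] := step2 Hfan x0.
set C' := fun x => forall b A, good Phi x0 y rho b A -> A x.
have C0C' : forall x, C0 x -> C' x.
  move=> x hx b A [hA Ax0 _]; exact: (face_arg Hfan (HD b) hA (HC0 b) c0 rel Ax0 hx).
have ballC' : forall w, near_v rho y w -> C' w by move=> w hw b A [_ _ h]; exact: h.
have C'add : forall x1 x2, C' x1 -> C' x2 -> C' (x1 + x2).
  move=> x1 x2 h1 h2 b A hA; have [hA' _ _] := hA.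
  exact: (polycone_add (fan_poly Hfan hA') (h1 b A hA) (h2 b A hA)).
have C'scale : forall x t, C' x -> 0 <= t -> C' (t *: x).
  move=> x t h t0 b A hA; have [hA' _ _] := hA.
  exact: (polycone_scale (fan_poly Hfan hA') (h b A hA) t0).
have C'lin : forall b x1 x2, C' x1 -> C' x2 -> mu a0 b (x1 + x2) = mu a0 b x1 + mu a0 b x2.
  move=> b x1 x2 h1 h2; have [A hA] := Hgood b; have [hA' _ _] := hA.
  have [B HB] := Hlin b A hA'.
  have A1 := h1 b A hA; have A2 := h2 b A hA; have A12 := C'add _ _ h1 h2 b A hA.
  by rewrite !HB // mulmxDl.
set T := fun v => C' (mu a a0 v).
have Tadd : forall v1 v2, T v1 -> T v2 -> T (v1 + v2).
  move=> v1 v2 h1 h2; rewrite /T.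
  have <- : mu a0 a (mu a a0 v1 + mu a a0 v2) = v1 + v2.
    by rewrite C'lin // !(mu_inv hmu).
  by rewrite (mu_inv hmu); apply: C'add.
have Tscale : forall v t, T v -> 0 <= t -> T (t *: v).
  by move=> v t h t0; rewrite /T (mu_hom hmu) //; apply: C'scale.
have [d dp Hd] := mu_cont hmu a a0 (mu a0 a y) rp.
have Tball : forall w, near_v d (mu a0 a y) w -> T w.
  move=> w hw; apply: ballC'; have := Hd w hw; by rewrite (mu_inv hmu).
have Tadd' : forall v1 v2, inFv F v1 -> inFv F v2 -> T v1 -> T v2 -> f a v1 + f a v2 = f a (v1 + v2).
  move=> v1 v2 h1 h2 t1 t2; apply: f_add_region => // b.
  rewrite -!(mu_comp hmu a a0 b) -C'lin //.
  have <- : mu a0 a (mu a a0 v1 + mu a a0 v2) = v1 + v2.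
    by rewrite C'lin // !(mu_inv hmu).
  by rewrite (mu_inv hmu).
have [c [cF Hc]] := lin_ext dp Tball Tadd Tscale Tadd'.
exists c, T; split => //.
- by move=> x hx; rewrite /T (mu_inv hmu); apply: C0C'.
- by move=> z v hv; apply: (loc_lin z dp Tball Tadd Tscale Hc).
Qed.
Lemma cone_list (D : I -> V -> Prop) : (forall b, polycone (D b)) ->
  exists L : seq V, forall x, cone_of L x <-> forall b, D b x.
Proof.
move=> Hp.
suff : forall bs : seq I, exists L : seq V, forall x, cone_of L x <-> forall b, b \in bs -> D b x.
  move=> /(_ (enum I)) [L HL]; exists L => x; split.
    by move=> /HL h b; apply: h; rewrite mem_enum.
  by move=> h; apply/HL => b _.
elim => [|b bs [L HL]]; first by exists [::] => x; split => // _ u.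
have [s Hs] := Hp b.
exists (s ++ L) => x; split.
  move=> h b'; rewrite inE => /orP [/eqP ->|hb'].
    by apply/Hs => u us; apply: h; rewrite mem_cat us.
  by apply: (proj1 (HL x)) => // u uL; apply: h; rewrite mem_cat uL orbT.
move=> h u; rewrite mem_cat => /orP [us|uL].
  by have /Hs := h b (mem_head _ _); apply.
by apply: (proj2 (HL x)) => // b' hb'; apply: h; rewrite inE hb' orbT.
Qed.

Lemma part1 a0 C0 : SigmaA mu a0 C0 -> forall a, exists c (T : V -> Prop),
  [/\ inFv F c, (forall x, C0 x -> T (mu a0 a x)),
    (forall v, inFv F v -> T v -> f a v = dotv c v) &
    (forall z v, T v -> G z (mu a z v) = dotv c v)].
Proof.
move=> [Phi [D [Hmin [HD HC]]]] a.
have Hfan : forall b, complete_fan (Phi b) by move=> b; have [] := Hmin b.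
have Hlin : forall b C, List.In C (Phi b) -> lin_on (mu a0 b) C by move=> b; have [_ []] := Hmin b.
have [L HL] := cone_list (fun b => fan_poly Hfan (HD b)).
have [x0 [hx0 rel]] := relint_ex L.
have c0 : C0 x0 by apply/HC/HL.
have rel' : forall c, C0 c -> exists2 s, 0 < s & C0 (x0 - s *: c).
  move=> c /HC /HL hc; have [s sp hs] := rel c hc; exists s => //; by apply/HC/HL.
have HC0 : forall b x, C0 x -> D b x by move=> b x /HC; apply.
have [c [T [h1 h2 h3 h4 _]]] := region Hfan Hlin HD HC0 c0 rel' a.
by exists c, T; split.
Qed.

Lemma ptwise z x : exists c (T : V -> Prop), [/\ inFv F c, T x,
    (forall v, T v -> G z v = dotv c v) & (forall v t, T v -> 0 <= t -> T (t *: v))].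
Proof.
pose Phi b := proj1_sig (constructive_indefinite_description _ (mu_fan hmu z b)).
have HPhi : forall b, complete_fan (Phi b) /\ forall C, List.In C (Phi b) -> lin_on (mu z b) C.
  by move=> b; rewrite /Phi; case: (constructive_indefinite_description _ _).
have Hfan : forall b, complete_fan (Phi b) by move=> b; have [] := HPhi b.
have Hlin : forall b C, List.In C (Phi b) -> lin_on (mu z b) C by move=> b; have [] := HPhi b.
have Hex : forall b, exists D, List.In D (Phi b) /\ D x.
  by move=> b; have [_ Hcov] := Hfan b; have [D hD Dx] := Hcov x; exists D.
pose D b := proj1_sig (constructive_indefinite_description _ (Hex b)).
have HD : forall b, List.In (D b) (Phi b) /\ D b x.
  by move=> b; rewrite /D; case: (constructive_indefinite_description _ _).
set C0 := fun v => exists2 t, 0 <= t & v = t *: x.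
have HC0 : forall b v, C0 v -> D b v.
  move=> b v [t t0 ->]; have [h1 h2] := HD b.
  exact: (polycone_scale (fan_poly Hfan h1) h2 t0).
have c0 : C0 x by exists 1 => //; rewrite scale1r.
have rel : forall c, C0 c -> exists2 s, 0 < s & C0 (x - s *: c).
  move=> c [t t0 ->]; exists (1 + t)^-1; first by rewrite invr_gt0 ltr_pwDl.
  exists (1 - (1 + t)^-1 * t).
    rewrite subr_ge0 -[X in _ <= X](divff (x := 1 + t)) ?gt_eqF ?ltr_pwDl //.
    by rewrite mulrC ler_wpM2r ?invr_ge0 ?addr_ge0 // lerDr.
  by rewrite scalerA scalerBl scale1r.
have [c [T [h1 h2 h3 h4 h5]]] := region Hfan Hlin (fun b => (HD b).1) HC0 c0 rel z.
exists c, T; split => //.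
- by have := h2 x c0; rewrite (mu_id hmu).
- by move=> v hv; have := h4 z v hv; rewrite (mu_id hmu).
Qed.
Lemma contV_id : contV (fun v : V => v).
Proof. by move=> x e ep; exists e. Qed.

Lemma near_add d1 d2 (u1 u2 v1 v2 : V) : near_v d1 u1 v1 -> near_v d2 u2 v2 ->
  near_v (d1 + d2) (u1 + u2) (v1 + v2).
Proof.
move=> h1 h2 i; rewrite !mxE (_ : _ - _ = (u1 0 i - v1 0 i) + (u2 0 i - v2 0 i)); last first.
  by rewrite opprD addrACA.
by apply: le_lt_trans (ler_normD _ _) _; apply: ltrD.
Qed.

Definition phi z b x x' := G z (mu b z (mu z b x + mu z b x')) - G z x - G z x'.

Lemma phi_cont z b x x' e : 0 < e -> exists2 d, 0 < d & forall y y',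
  near_v d x y -> near_v d x' y' -> `|phi z b x x' - phi z b y y'| < e.
Proof.
move=> ep; have e3 : 0 < e / 3%:R by rewrite divr_gt0.
have [d1 d1p H1] := G_cont_comp z (mu_cont hmu b z) (mu z b x + mu z b x') e3.
have d1h : 0 < d1 / 2 by rewrite divr_gt0.
have [d2 d2p H2] := mu_cont hmu z b x d1h.
have [d3 d3p H3] := mu_cont hmu z b x' d1h.
have [d4 d4p H4] := G_cont_comp z contV_id x e3.
have [d5 d5p H5] := G_cont_comp z contV_id x' e3.
exists (Num.min d2 (Num.min d3 (Num.min d4 d5))).
  by rewrite !lt_min d2p d3p d4p d5p.
move=> y y' hy hy'.
have hy2 : near_v d2 x y by apply: near_mono hy; rewrite ge_min lexx.
have hy4 : near_v d4 x y by apply: near_mono hy; rewrite !ge_min lexx !orbT.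
have hy3 : near_v d3 x' y' by apply: near_mono hy'; rewrite !ge_min lexx !orbT.
have hy5 : near_v d5 x' y' by apply: near_mono hy'; rewrite !ge_min lexx !orbT.
have hs := near_add (H2 y hy2) (H3 y' hy3); rewrite -splitr in hs.
have k1 := H1 _ hs; have k2 := H4 y hy4; have k3 := H5 y' hy5.
rewrite /phi.
set A := G z (mu b z (mu z b x + mu z b x')) in k1 *.
set A' := G z (mu b z (mu z b y + mu z b y')) in k1 *.
set B := G z x in k2 *; set B' := G z y in k2 *.
set C := G z x' in k3 *; set C' := G z y' in k3 *.
have -> : A - B - C - (A' - B' - C') = (A - A') - (B - B') - (C - C') by ring.
apply: le_lt_trans (ler_normB _ _) _; have := ler_normB (A - A') (B - B').
have -> : e = e / 3%:R + e / 3%:R + e / 3%:R by field.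
lra.
Qed.

Lemma D_pair (x x' : V) d : 0 < d -> exists N w w',
  [/\ (0 < N)%N, inFv F w, inFv F w', near_v d x (Dpt N w) & near_v d x' (Dpt N w')].
Proof.
move=> dp; have [N1 [w1 [N1p hw1 h1]]] := D_dense x dp.
have [N2 [w2 [N2p hw2 h2]]] := D_dense x' dp.
have N1r : (0 : R) < N1%:R by rewrite ltr0n.
have N2r : (0 : R) < N2%:R by rewrite ltr0n.
exists (N1 * N2)%N, (N2%:R *: w1), (N1%:R *: w2); split.
- by rewrite muln_gt0 N1p.
- by apply: (inFvZ hF) => //; apply: (Fnat hF).
- by apply: (inFvZ hF) => //; apply: (Fnat hF).
- have -> : Dpt (N1 * N2) (N2%:R *: w1) = Dpt N1 w1.
    by rewrite /Dpt scalerA natrM; congr (_ *: _); field; rewrite !gt_eqF.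
  exact: h1.
- have -> : Dpt (N1 * N2) (N1%:R *: w2) = Dpt N2 w2.
    by rewrite /Dpt scalerA natrM; congr (_ *: _); field; rewrite !gt_eqF.
  exact: h2.
Qed.

Lemma phi_D z b N w w' : (0 < N)%N -> inFv F w -> inFv F w' ->
  phi z b (Dpt N w) (Dpt N w') =
  (f b (mu z b w + mu z b w') - f z w - f z w') / N%:R.
Proof.
move=> Np hw hw'.
have Nr : (0 : R) < N%:R by rewrite ltr0n.
have hs : inFv F (mu z b w + mu z b w').
  by apply: (inFvD hF); apply: (mu_Fpt hmu hF FF).
rewrite /phi /Dpt !(mu_hom hmu) ?invr_ge0 ?ltW // -scalerDr (mu_hom hmu) ?invr_ge0 ?ltW //.
rewrite -!/(Dpt N _) !G_D //; last exact: (mu_Fpt hmu hF FF).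
by rewrite f_chart !mulrBl.
Qed.

Lemma trop_D z N w w' : (0 < N)%N -> inFv F w -> inFv F w' ->
  (forall b, 0 <= phi z b (Dpt N w) (Dpt N w')) /\ exists b, phi z b (Dpt N w) (Dpt N w') = 0.
Proof.
move=> Np hw hw'; have Nr : (0 : R) < N%:R by rewrite ltr0n.
case: hp => _ [h _]; have [[b hb] hle] := h _ _ (Fpinv z hw) (Fpinv z hw').
have E : forall b, p (addA mu b (pinv mu z w) (pinv mu z w')) = f b (mu z b w + mu z b w') by [].
split.
  move=> b'; rewrite phi_D //; apply: divr_ge0; last exact: ltW.
  have := hle b'; rewrite E /f; lra.
exists b; rewrite phi_D //; apply/eqP; rewrite mulf_eq0; apply/orP; left.
rewrite -E -hb /f; apply/eqP; ring.
Qed.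

Lemma trop z x x' : (forall b, 0 <= phi z b x x') /\ exists b, phi z b x x' = 0.
Proof.
have ge : forall b, 0 <= phi z b x x'.
  move=> b; rewrite leNgt; apply/negP => hlt.
  have hlt' : 0 < - phi z b x x' by rewrite oppr_gt0.
  have [d dp Hd] := phi_cont z b x x' hlt'.
  have [N [w [w' [Np hw hw' h1 h2]]]] := D_pair x x' dp.
  have := Hd _ _ h1 h2; have [k _] := trop_D z Np hw hw'; have := k b.
  set u := phi z b (Dpt N w) (Dpt N w'); set v := phi z b x x' => h3 h4.
  have := ler_norm (u - v); rewrite distrC in h4; lra.
split => //; apply: NNPP => hn.
have pos : forall b, 0 < phi z b x x'.
  move=> b; rewrite lt_neqAle ge andbT; apply/negP => /eqP h; apply: hn; by exists b.
have [d dp Hd] := fin_delta_fin (P := fun b d => forall y y', near_v d x y -> near_v d x' y' ->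
    `|phi z b x x' - phi z b y y'| < phi z b x x')
  (fun b e e' e'p h1 h2 y y' hy hy' => h2 y y' (near_mono h1 hy) (near_mono h1 hy'))
  (fun b => phi_cont z b x x' (pos b)).
have [N [w [w' [Np hw hw' h1 h2]]]] := D_pair x x' dp.
have [_ [b hb]] := trop_D z Np hw hw'.
have := Hd b _ _ h1 h2; rewrite hb subr0 ger0_norm ?ge //; by rewrite ltxx.
Qed.

End Fun.
Unset Implicit Arguments.
Theorem mainTheorem1 (R : realType) (r : nat) (I : finType) (F : R -> Prop)
  (mu : I -> I -> 'rV[R]_r -> 'rV[R]_r) (p : (I -> 'rV[R]_r) -> R) :
  is_subring F -> is_polyptych F mu -> is_point F mu p ->
  (forall a0 C0, SigmaA mu a0 C0 -> forall a, lin_on_cone F mu p a0 C0 a) /\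
  (forall F' : R -> Prop, is_subring F' -> (forall x, F x -> F' x) ->
     exists q : (I -> 'rV[R]_r) -> R,
       (forall m, elems F mu m -> q m = p m) /\
       (forall a, cont_on (inFv F') (fun v => q (pinv mu a v))) /\
       (forall a0 C0, SigmaA mu a0 C0 -> forall a, lin_on_cone F' mu q a0 C0 a) /\
       is_point F' mu q).
Proof.
move=> hF hmu hp; split.
  move=> a0 C0 hS a; have [c [T [h1 h2 h3 _]]] := part1 hF hmu hp hS a.
  exists c; split => // v [x hx ->] hv; exact: h3 _ hv (h2 x hx).
move=> F' hF' FF'.
have [z _] : exists z : I, True.
  have hm0 : elems F mu (fun _ : I => (0 : 'rV[R]_r)).
    split => [a b|a]; [by rewrite (mu0 hmu) | exact: (inFv0 hF)].
  by case: hp => _ [h _]; have [[a _] _] := h _ _ hm0 hm0; exists a.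
have FvF' : forall v : 'rV[R]_r, inFv F v -> inFv F' v by move=> v hv i; apply: FF'.
exists (fun m => G mu F p z (m z)); split.
  move=> m [hm1 hm2].
  have em := elems_pinv_gen z hm1.
  have -> : m z = Dpt 1 (m z) by rewrite /Dpt invr1 scale1r.
  rewrite (G_D hF hmu hp) // divr1 /f -em //.
split.
  move=> a x _ e ep; have [d dp Hd] := G_cont_comp hF hmu hp z (mu_cont hmu a z) x ep.
  by exists d => // y _ hy; exact: Hd.
split.
  move=> a0 C0 hS a; have [c [T [h1 h2 h3 h4]]] := part1 hF hmu hp hS a.
  exists c; split; first exact: FvF'.
  by move=> v [x hx ->] hv; exact: h4 _ _ (h2 x hx).
split.
  move=> m [hm1 hm2]; have [c [T [h1 h2 h3 _]]] := ptwise hF hmu hp z (m z).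
  rewrite h3 //; apply: (Fdot hF'); [exact: FvF' | exact: hm2].
split.
  move=> m m' [hm1 hm2] [hm1' hm2'].
  have E : forall b, G mu F p z (addA mu b m m' z) = G mu F p z (mu b z (mu z b (m z) + mu z b (m' z))).
    by move=> b; rewrite /addA /pinv (hm1 z b) (hm1' z b).
  have [ge [b hb]] := trop hF hmu hp z (m z) (m' z).
  split.
    by exists b; rewrite E; move: hb; rewrite /phi; lra.
  by move=> b'; rewrite E; have := ge b'; rewrite /phi; lra.
move=> l m b hl l0 [hm1 hm2].
rewrite /scaleA /pinv (hm1 z b) (mu_hom hmu) // (mu_inv hmu).
have [c [T [h1 h2 h3 h4]]] := ptwise hF hmu hp z (m z).
by rewrite !h3 ?dotvZ //; apply: h4.
Qed.
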